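(* Let $d$ and $r$ be odd integers satisfying $d\geqslant 3$, $r\leqslant d-4$ and $\gcd(d,r)=1$. Let $n$ be an integer such that $n\geqslant (d-r)/2$ and $n\equiv -r/2\pmod{d}$ (that is, $2n\equiv -r\pmod d$). Then none of the numbers in the arithmetic progression \[ \frac{d+r}{2},\ \frac{d+r}{2}+d,\ \ldots,\ \frac{d+r}{2}+dn-2n-r-d \] (with common difference $d$) is a multiple of $n$. *)

(* Defs.v *)
From mathcomp Require Import all_boot all_order all_algebra.
Set Implicit Arguments. Unset Strict Implicit. Unset Printing Implicit Defensive.
Import Order.TTheory GRing.Theory Num.Theory.

(* Main.v *)
Require Import Defs.
From Stdlib Require Import ZArith Lia.
From mathcomp Require Import all_boot all_order all_algebra.
From mathcomp Require Import zify ring.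
Import Order.TTheory GRing.Theory Num.Theory.
Local Open Scope ring_scope.
Theorem lemma4 (d r n : int)
  (hd_odd : ~~ (2 %| d)%Z) (hr_odd : ~~ (2 %| r)%Z)
  (hd3 : 3 <= d) (hrd : r <= d - 4) (hgcd : gcdz d r = 1)
  (hn : ((d - r) %/ 2)%Z <= n) (hnmod : (2 * n == - r %[mod d])%Z) :
  forall k : int, 0 <= k ->
    ((d + r) %/ 2)%Z + k * d <= ((d + r) %/ 2)%Z + d * n - 2 * n - r - d ->
    ~~ (n %| ((d + r) %/ 2)%Z + k * d)%Z.
Proof.
move=> k hk hle; apply/negP => hdiv.
have [u [v huv]] := Bezoutz d r.
rewrite hgcd in huv; clear hgcd.
have ha : d + r = 2 * ((d + r) %/ 2)%Z by clear -hd_odd hr_odd; lia.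
have hn2 : d - r <= 2 * n by clear -hd_odd hr_odd hn; lia.
move: ha hle hdiv; set a := ((d + r) %/ 2)%Z => ha hle hdiv.
clearbody a; clear hn hd_odd hr_odd.
move: hnmod; rewrite eqz_mod_dvd => /dvdzP [m hm].
move/dvdzP: hdiv => [t ht].
have hW : t + 1 = d * ((t+1)*u + v*(m*(t+1) - (1 + 2*k + m))).
  have H1 : (t+1)*(u*d+v*r) = (t+1)*1 by rewrite huv.
  have H2 : v*(t+1)*(2*n - - r) = v*(t+1)*(m*d) by rewrite hm.
  have H3 : v*(a + k*d) = v*(t*n) by rewrite ht.
  have H4 : v*(d+r) = v*(2*a) by rewrite ha.
  have H5 : v*(2*n - - r) = v*(m*d) by rewrite hm.
  apply/eqP; rewrite eq_sym -subr_eq0; apply/eqP.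
  transitivity (((t+1)*(u*d+v*r) - (t+1)*1) - (v*(t+1)*(2*n - - r) - v*(t+1)*(m*d))
     - 2 * (v*(a + k*d) - v*(t*n)) - (v*(d+r) - v*(2*a)) + (v*(2*n - - r) - v*(m*d))).
    ring.
  by rewrite H1 H2 H3 H4 H5 !subrr; ring.
have hle2 : t * n <= n * (d - 2) - a by clear -hle ht ha; lia.
have hlo : a <= t * n by clear -ht hk hd3; nia.
clear hle ht huv hm.
case: (lerP 1 ((t+1)*u + v*(m*(t+1) - (1 + 2*k + m)))) => hs.
- set s := ((t+1)*u + v*(m*(t+1) - (1 + 2*k + m))) in hW hs.
  clearbody s.
  have : 0 <= (s - 1) * d * n by apply: mulr_ge0; [apply: mulr_ge0|]; lia.
  nia.
- set s := ((t+1)*u + v*(m*(t+1) - (1 + 2*k + m))) in hW hs.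
  clearbody s.
  have : 0 <= (- s) * d * n by apply: mulr_ge0; [apply: mulr_ge0|]; lia.
  nia.
Qed.
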